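(* Let $(V_0,\dots,V_d)$ be a partition of $V$, $\mathbf x\in\mathbb R^V$, and $\Delta=(\Delta(0),\dots,\Delta(d))\in\mathbb R^{d+1}$. Let $\tilde{\mathbf x}$ be obtained from $\mathbf x$ by adding $\Delta(i)$ to the potential of every vertex in $V_i$. Then $$\mathcal B(\tilde{\mathbf x})-\mathcal B(\mathbf x)=\mathbf b_H^\top\Delta-\tfrac12\Delta^\top\mathbf L_H\Delta,$$ where $H$ is the contracted graph with vertices $V_0,\dots,V_d$ and resistances $r(V_k,V_l)=\big(\sum_{ij\in\delta(V_k,V_l)}\frac1{r(i,j)}\big)^{-1}$, $\mathbf L_H$ is the Laplacian of $H$, and $b_H(k)=b(V_k)-f(V_k)$ for $k=0,\dots,d$. In particular, the $\Delta$ maximizing $\mathcal B(\tilde{\mathbf x})-\mathcal B(\mathbf x)$ is given by a solution of $\mathbf L_H\Delta=\mathbf b_H$.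
   Context: $G=(V,E)$ is an undirected graph with resistances $r(e)>0$ and a fixed orientation $\vec E$; $\mathbf b\in\mathbb R^V$ with $\sum_ib(i)=0$. $\mathbf L=\sum_{ij\in E}\frac1{r(i,j)}(\mathbf e_i-\mathbf e_j)(\mathbf e_i-\mathbf e_j)^\top$ and $\mathcal B(\mathbf x)=\mathbf b^\top\mathbf x-\frac12\mathbf x^\top\mathbf L\mathbf x$. For $U\subset V$, $b(U)=\sum_{v\in U}b(v)$ and $f(U)=\sum_{ij\in E,\,i\in U,\,j\notin U}\frac{x(i)-x(j)}{r(i,j)}$ is the flow leaving $U$ in the potential-induced flow of $\mathbf x$; $\delta(V_k,V_l)$ is the set of edges with one endpoint in $V_k$ and the other in $V_l$. The Laplacian of a graph with resistances $r_H$ is $\sum_{kl}\frac1{r_H(k,l)}(\mathbf e_k-\mathbf e_l)(\mathbf e_k-\mathbf e_l)^\top$. *)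

(* Defs.v *)
(* Vertices V = 'I_n, edges E = 'I_m with a fixed orientation
   tl e -> hd e, resistances r : 'I_m -> R. Vectors in R^V are 'cV[R]_n. *)
From HB Require Import structures.
From mathcomp Require Import all_boot all_order all_algebra.
Set Implicit Arguments. Unset Strict Implicit. Unset Printing Implicit Defensive.
Import Order.TTheory GRing.Theory Num.Theory.
Local Open Scope ring_scope.

Section Defs.
Variable R : realFieldType.

Definition evec (n : nat) (i : 'I_n) : 'cV[R]_n := delta_mx i 0.

Definition laplacian (n m : nat) (tl hd : 'I_m -> 'I_n) (r : 'I_m -> R) : 'M[R]_n :=
  \sum_(e < m) (r e)^-1 *: ((evec (tl e) - evec (hd e)) *m (evec (tl e) - evec (hd e))^T).

Definition Bfun (n m : nat) (tl hd : 'I_m -> 'I_n) (r : 'I_m -> R) (b x : 'cV[R]_n) : R :=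
  (b^T *m x) 0 0 - 2^-1 * (x^T *m laplacian tl hd r *m x) 0 0.

Definition bset (n : nat) (b : 'cV[R]_n) (U : {set 'I_n}) : R := \sum_(v in U) b v 0.

(* f(U): flow leaving U in the potential-induced flow of x *)
Definition flow_out (n m : nat) (tl hd : 'I_m -> 'I_n) (r : 'I_m -> R)
  (x : 'cV[R]_n) (U : {set 'I_n}) : R :=
  \sum_(e < m)
    (if (tl e \in U) && (hd e \notin U) then (x (tl e) 0 - x (hd e) 0) / r e
     else if (hd e \in U) && (tl e \notin U) then (x (hd e) 0 - x (tl e) 0) / r e
     else 0).

Definition block (n d : nat) (part : 'I_n -> 'I_d.+1) (k : 'I_d.+1) : {set 'I_n} :=
  [set v | part v == k].

Definition cut_edge (n m d : nat) (tl hd : 'I_m -> 'I_n) (part : 'I_n -> 'I_d.+1)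
  (k l : 'I_d.+1) (e : 'I_m) : bool :=
  ((part (tl e) == k) && (part (hd e) == l)) || ((part (tl e) == l) && (part (hd e) == k)).

(* r_H(V_k,V_l) = (sum_{ij in delta(V_k,V_l)} 1/r(i,j))^-1  (with 0^-1 = 0 convention
   when the cut is empty, so that 1/r_H = 0, i.e. no edge in H) *)
Definition rH (n m d : nat) (tl hd : 'I_m -> 'I_n) (r : 'I_m -> R) (part : 'I_n -> 'I_d.+1)
  (k l : 'I_d.+1) : R :=
  (\sum_(e < m | cut_edge tl hd part k l e) (r e)^-1)^-1.

Definition laplacianH (n m d : nat) (tl hd : 'I_m -> 'I_n) (r : 'I_m -> R)
  (part : 'I_n -> 'I_d.+1) : 'M[R]_d.+1 :=
  \sum_(k < d.+1) \sum_(l < d.+1 | (k < l)%N)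
     (rH tl hd r part k l)^-1 *: ((evec k - evec l) *m (evec k - evec l)^T).

Definition bH (n m d : nat) (tl hd : 'I_m -> 'I_n) (r : 'I_m -> R)
  (part : 'I_n -> 'I_d.+1) (b x : 'cV[R]_n) : 'cV[R]_d.+1 :=
  \col_k (bset b (block part k) - flow_out tl hd r x (block part k)).

Definition shift (n d : nat) (part : 'I_n -> 'I_d.+1) (x : 'cV[R]_n) (D : 'cV[R]_d.+1)
  : 'cV[R]_n := x + \col_v D (part v) 0.

End Defs.

(* Main.v *)
Require Import Defs.
From HB Require Import structures.
From mathcomp Require Import all_boot all_order all_algebra.
From mathcomp Require Import ring lra zify.
Import Order.TTheory GRing.Theory Num.Theory.
Local Open Scope ring_scope.

Section S.
Variable R : realFieldType.

Lemma mx11_mul (k : nat) (A : 'M[R]_(1,k)) (B : 'M[R]_(k,1)) (C : 'M[R]_(k,1)) (E : 'M[R]_(k,1)) :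
  (A *m (B *m C^T) *m E) 0 0 = (A *m B) 0 0 * (C^T *m E) 0 0.
Proof.
rewrite mulmxA -mulmxA.
rewrite [LHS]mxE big_ord1. done.
Qed.
End S.

Section S.
Variable R : realFieldType.
Lemma tevec (k : nat) (u : 'cV[R]_k) i : (u^T *m evec R i) 0 0 = u i 0.
Proof. rewrite /evec -colE. by rewrite !mxE. Qed.

Lemma tevec' (k : nat) (u : 'cV[R]_k) i : ((evec R i)^T *m u) 0 0 = u i 0.
Proof.
rewrite /evec trmx_delta -rowE. by rewrite mxE.
Qed.
End S.

Section S.
Variable R : realFieldType.
Lemma subE (p q : nat) (A B : 'M[R]_(p,q)) i j : (A - B) i j = A i j - B i j.
Proof. by rewrite !mxE. Qed.
Lemma qf_diff (k : nat) (u w : 'cV[R]_k) i j :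
  (u^T *m ((evec R i - evec R j) *m (evec R i - evec R j)^T) *m w) 0 0
  = (u i 0 - u j 0) * (w i 0 - w j 0).
Proof.
rewrite mx11_mul mulmxBr subE !tevec.
by rewrite linearB /= mulmxBl subE !tevec'.
Qed.
End S.

Section S.
Variable R : realFieldType.
Lemma sum_qf (k : nat) (u w : 'cV[R]_k) (I : Type) (s : seq I) (P : pred I)
  (c : I -> R) (M : I -> 'M[R]_k) :
  (u^T *m (\sum_(i <- s | P i) c i *: M i) *m w) 0 0
  = \sum_(i <- s | P i) c i * (u^T *m M i *m w) 0 0.
Proof.
rewrite mulmx_sumr mulmx_suml summxE; apply: eq_bigr => i _.
by rewrite -scalemxAr -scalemxAl mxE.
Qed.

Lemma Lqf (n m : nat) (tl hd : 'I_m -> 'I_n) (r : 'I_m -> R) (u w : 'cV[R]_n) :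
  (u^T *m laplacian tl hd r *m w) 0 0
  = \sum_(e < m) (r e)^-1 * ((u (tl e) 0 - u (hd e) 0) * (w (tl e) 0 - w (hd e) 0)).
Proof. by rewrite /laplacian sum_qf; apply: eq_bigr => e _; rewrite qf_diff. Qed.

Lemma LHqf0 (n m d : nat) (tl hd : 'I_m -> 'I_n) (r : 'I_m -> R) part (u w : 'cV[R]_d.+1) :
  (u^T *m laplacianH tl hd r part *m w) 0 0
  = \sum_(k < d.+1) \sum_(l < d.+1 | (k < l)%N)
     \sum_(e < m | cut_edge tl hd part k l e) (r e)^-1 * ((u k 0 - u l 0) * (w k 0 - w l 0)).
Proof.
rewrite /laplacianH mulmx_sumr mulmx_suml summxE; apply: eq_bigr => k _.
rewrite sum_qf; apply: eq_bigr => l _.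
by rewrite qf_diff /rH invrK mulr_suml.
Qed.
End S.

Section S.
Variable R : realFieldType.

Lemma collapse (d : nat) (a c : 'I_d.+1) (g : 'I_d.+1 -> 'I_d.+1 -> R) :
  (forall k l, g k l = g l k) -> g a a = 0 ->
  \sum_(k < d.+1) \sum_(l < d.+1) (if (k < l)%N && (((a == k) && (c == l)) || ((a == l) && (c == k))) then g k l else 0)
  = g a c.
Proof.
move=> gs g0.
rewrite pair_big /= -big_mkcond /=.
have [lt|gt|eq] := ltngtP a c.
- rewrite (big_pred1 (a, c)) // => [[k l]] /=.
  rewrite xpair_eqE -!val_eqE /=; lia.
- rewrite (big_pred1 (c, a)) //= => [[k l]] /=.
  rewrite xpair_eqE -!val_eqE /=; lia.
- have ac : a = c by apply: val_inj.
  subst c; rewrite g0 big_pred0 // => [[k l]] /=.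
  rewrite -!val_eqE /=; lia.
Qed.
End S.

Section S.
Variable R : realFieldType.
Lemma LHqf (n m d : nat) (tl hd : 'I_m -> 'I_n) (r : 'I_m -> R) part (u w : 'cV[R]_d.+1) :
  (u^T *m laplacianH tl hd r part *m w) 0 0
  = \sum_(e < m) (r e)^-1 * ((u (part (tl e)) 0 - u (part (hd e)) 0)
                            * (w (part (tl e)) 0 - w (part (hd e)) 0)).
Proof.
rewrite LHqf0.
transitivity (\sum_(k < d.+1) \sum_(l < d.+1) \sum_(e < m)
   (if (k < l)%N && cut_edge tl hd part k l e then
     (r e)^-1 * ((u k 0 - u l 0) * (w k 0 - w l 0)) else 0)).
  apply: eq_bigr => k _; rewrite big_mkcond; apply: eq_bigr => l _.
  case: (k < l)%N => /=; last by rewrite big1.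
  by rewrite big_mkcond.
rewrite exchange_big /=; under eq_bigr => k _ do rewrite exchange_big /=.
rewrite exchange_big /=; apply: eq_bigr => e _.
rewrite exchange_big /=.
rewrite -(@collapse R _ (part (tl e)) (part (hd e)) (fun k l => (r e)^-1 * ((u k 0 - u l 0) * (w k 0 - w l 0)))).
- by apply: eq_bigr => k _; apply: eq_bigr => l _.
- move=> k l /=; by congr (_ * _); rewrite -mulrNN !opprB.
- by rewrite /= addrN mul0r mulr0.
Qed.
End S.

Section S.
Variable R : realFieldType.
Lemma bsum (n d : nat) (b : 'cV[R]_n) (part : 'I_n -> 'I_d.+1) (D : 'cV[R]_d.+1) :
  \sum_(k < d.+1) bset b (block part k) * D k 0 = \sum_(v < n) b v 0 * D (part v) 0.
Proof.
rewrite (partition_big part predT) //=; apply: eq_bigr => k _.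
rewrite /bset mulr_suml; apply: eq_big => [v|v].
  by rewrite /block in_set.
by rewrite /block in_set => /eqP ->.
Qed.

Lemma fsum (n m d : nat) (tl hd : 'I_m -> 'I_n) (r : 'I_m -> R) (part : 'I_n -> 'I_d.+1)
   (x : 'cV[R]_n) (D : 'cV[R]_d.+1) :
  \sum_(k < d.+1) flow_out tl hd r x (block part k) * D k 0
  = \sum_(e < m) (r e)^-1 * ((x (tl e) 0 - x (hd e) 0) * (D (part (tl e)) 0 - D (part (hd e)) 0)).
Proof.
under eq_bigr => k _ do rewrite /flow_out mulr_suml.
rewrite exchange_big /=; apply: eq_bigr => e _.
under eq_bigr => k _ do rewrite /block !in_set.
have [ac|ac] := eqVneq (part (tl e)) (part (hd e)).
  rewrite ac subrr !mulr0 big1 // => k _.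
  by rewrite !andbN mul0r.
rewrite (bigD1 (part (tl e))) //= (bigD1 (part (hd e))) /=; last by rewrite eq_sym.
rewrite big1 ?addr0; last first.
  move=> k /andP [k1 k2].
  by rewrite eq_sym in k1; rewrite eq_sym in k2; rewrite (negbTE k1) (negbTE k2) /= mul0r.
have ca : (part (hd e) == part (tl e)) = false by rewrite eq_sym (negbTE ac).
rewrite !eqxx (negbTE ac) ca /=.
ring.
Qed.
End S.


Lemma dotE (R : realFieldType) (k : nat) (b z : 'cV[R]_k) :
  (b^T *m z) 0 0 = \sum_(v < k) b v 0 * z v 0.
Proof. by rewrite mxE; apply: eq_bigr => v _; rewrite mxE. Qed.

Lemma sq_sum (R : realFieldType) (m : nat) (c p q : 'I_m -> R) :
  (forall e, 0 <= c e) ->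
  0 <= \sum_(e < m) c e * (p e * p e) - 2 * \sum_(e < m) c e * (p e * q e)
       + \sum_(e < m) c e * (q e * q e).
Proof.
move=> c0.
have -> : \sum_(e < m) c e * (p e * p e) - 2 * \sum_(e < m) c e * (p e * q e)
       + \sum_(e < m) c e * (q e * q e) = \sum_(e < m) c e * ((p e - q e) * (p e - q e)).
  rewrite mulr_sumr -sumrB -big_split /=; apply: eq_bigr => e _; ring.
apply: sumr_ge0 => e _; apply: mulr_ge0 => //.
by rewrite -expr2 sqr_ge0.
Qed.

Theorem mainTheorem8 (R : realFieldType) (n m d : nat)
  (tl hd : 'I_m -> 'I_n) (r : 'I_m -> R) (b : 'cV[R]_n)
  (part : 'I_n -> 'I_d.+1) (x : 'cV[R]_n) :
  (forall e, tl e != hd e) ->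
  (forall e, 0 < r e) ->
  \sum_(v < n) b v 0 = 0 ->
  (forall k : 'I_d.+1, exists v, part v = k) ->
  (forall D : 'cV[R]_d.+1,
     Bfun tl hd r b (shift part x D) - Bfun tl hd r b x
     = ((bH tl hd r part b x)^T *m D) 0 0
       - 2^-1 * (D^T *m laplacianH tl hd r part *m D) 0 0)
  /\
  (forall D0 : 'cV[R]_d.+1,
     laplacianH tl hd r part *m D0 = bH tl hd r part b x ->
     forall D : 'cV[R]_d.+1,
       Bfun tl hd r b (shift part x D) - Bfun tl hd r b x
       <= Bfun tl hd r b (shift part x D0) - Bfun tl hd r b x).
Proof.
move=> _ rpos _ _.
have P1 : forall D : 'cV[R]_d.+1,
     Bfun tl hd r b (shift part x D) - Bfun tl hd r b x
     = ((bH tl hd r part b x)^T *m D) 0 0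
       - 2^-1 * (D^T *m laplacianH tl hd r part *m D) 0 0.
  move=> D.
  have sE : forall v, shift part x D v 0 = x v 0 + D (part v) 0.
    by move=> v; rewrite /shift !mxE.
  rewrite /Bfun !dotE !Lqf LHqf.
  under eq_bigr => v _ do rewrite sE.
  under [X in _ - 2^-1 * X]eq_bigr => e _ do rewrite !sE.
  have -> : \sum_(i < d.+1) bH tl hd r part b x i 0 * D i 0
     = \sum_(i < d.+1) bset b (block part i) * D i 0 - \sum_(i < d.+1) flow_out tl hd r x (block part i) * D i 0.
    by rewrite -sumrB; apply: eq_bigr => i _; rewrite mxE mulrBl.
  rewrite bsum fsum.
  have -> : \sum_(v < n) b v 0 * (x v 0 + D (part v) 0)
      = \sum_(v < n) b v 0 * x v 0 + \sum_(v < n) b v 0 * D (part v) 0.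
    by rewrite -big_split; apply: eq_bigr => v _; rewrite mulrDr.
  have -> : \sum_(e < m) (r e)^-1 * ((x (tl e) 0 + D (part (tl e)) 0 - (x (hd e) 0 + D (part (hd e)) 0)) *
     (x (tl e) 0 + D (part (tl e)) 0 - (x (hd e) 0 + D (part (hd e)) 0)))
     = \sum_(e < m) (r e)^-1 * ((x (tl e) 0 - x (hd e) 0) * (x (tl e) 0 - x (hd e) 0))
       + 2 * \sum_(e < m) (r e)^-1 * ((x (tl e) 0 - x (hd e) 0) * (D (part (tl e)) 0 - D (part (hd e)) 0))
       + \sum_(e < m) (r e)^-1 * ((D (part (tl e)) 0 - D (part (hd e)) 0) * (D (part (tl e)) 0 - D (part (hd e)) 0)).
    rewrite mulr_sumr -!big_split /=; apply: eq_bigr => e _; ring.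
  lra.
split=> // D0 HD0 D.
rewrite !P1.
have bq : forall D1 : 'cV[R]_d.+1, ((bH tl hd r part b x)^T *m D1) 0 0 = (D1^T *m laplacianH tl hd r part *m D0) 0 0.
  move=> D'; rewrite -mulmxA HD0 !dotE; apply: eq_bigr => k _; by rewrite mulrC.
rewrite !bq !LHqf.
have := @sq_sum R m (fun e => (r e)^-1) (fun e => D0 (part (tl e)) 0 - D0 (part (hd e)) 0)
   (fun e => D (part (tl e)) 0 - D (part (hd e)) 0).
have c0 : forall e, 0 <= (r e)^-1 by move=> e; rewrite invr_ge0 ltW.
move=> /(_ c0).
have -> : \sum_(e < m) (r e)^-1 * ((D0 (part (tl e)) 0 - D0 (part (hd e)) 0) * (D (part (tl e)) 0 - D (part (hd e)) 0))
  = \sum_(e < m) (r e)^-1 * ((D (part (tl e)) 0 - D (part (hd e)) 0) * (D0 (part (tl e)) 0 - D0 (part (hd e)) 0)).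
  by apply: eq_bigr => e _; rewrite [X in _ * X]mulrC.
move=> H; lra.
Qed.
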